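(* Let $a,b,x$ be non-commuting indeterminates and let $D\in\mathbb{Z}\langle\langle a,b,x\rangle\rangle$ be the unique series satisfying $$D=1+(x-ab+aDb)\,D$$ (equivalently, $D$ is the sum of all Dyck words in $a,b$ in which every occurrence of the factor $ab$ is replaced by $x$). Define $U\in\mathbb{Z}\langle\langle a,b,x\rangle\rangle$ by $(1-aDb)^{-1}=1+aUb$. Then $$U=(1+aUb)\big(1+(x-ab+ba)U\big),$$ and this equation determines $U$ uniquely.
   Context: $\mathbb{Z}\langle\langle a,b,x\rangle\rangle$ is the ring of formal power series in non-commuting variables $a,b,x$ with integer coefficients. A Dyck word is a word in $a,b$ with equally many $a$'s and $b$'s such that every prefix has at least as many $a$'s as $b$'s (equivalently, a lattice path with steps $a=(1,1)$, $b=(1,-1)$ from the origin back to the $x$-axis never going below it); the empty word is included. *)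

(* Defs.v *)
(* Formal power series in non-commuting variables a, b, x
   with integer coefficients: functions from words to int. *)
From mathcomp Require Import all_boot all_order all_algebra.
Set Implicit Arguments. Unset Strict Implicit. Unset Printing Implicit Defensive.
Import GRing.Theory.
Local Open Scope ring_scope.

Inductive letter := La | Lb | Lx.

Definition letter_eqb (l m : letter) : bool :=
  match l, m with
  | La, La | Lb, Lb | Lx, Lx => true
  | _, _ => false
  end.

Definition series := seq letter -> int.

Definition sone : series := fun w => if w is [::] then 1 else 0.
Definition slet (c : letter) : series :=
  fun w => if w is [:: l] then (if letter_eqb l c then 1 else 0) else 0.
Definition sa : series := slet La.
Definition sb : series := slet Lb.
Definition sx : series := slet Lx.

Definition sadd (f g : series) : series := fun w => f w + g w.
Definition sopp (f : series) : series := fun w => - f w.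
Definition ssub (f g : series) : series := sadd f (sopp g).
Definition smul (f g : series) : series :=
  fun w => \sum_(i < (size w).+1) f (take i w) * g (drop i w).

(* Main.v *)
Require Import Defs.
From HB Require Import structures.
From mathcomp Require Import all_boot all_order all_algebra.
From mathcomp Require Import boolp zify.
Set Implicit Arguments. Unset Strict Implicit. Unset Printing Implicit Defensive.
Import GRing.Theory.
Local Open Scope ring_scope.

Lemma smul_nil f g : smul f g [::] = f [::] * g [::].
Proof. by rewrite /smul big_ord1. Qed.

Lemma smul_cons f g c w :
  smul f g (c :: w) = f [::] * g (c :: w) + smul (fun u => f (c :: u)) g w.
Proof. by rewrite /smul big_ord_recl /=. Qed.

Definition szero : series := fun _ => 0.
Definition sscale (k : int) (f : series) : series := fun w => k * f w.

Lemma smulDl f g h : smul (sadd f g) h = sadd (smul f h) (smul g h).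
Proof. apply: funext => w; rewrite /smul /sadd -big_split; apply: eq_bigr => i _; exact: mulrDl. Qed.
Lemma smulDr f g h : smul f (sadd g h) = sadd (smul f g) (smul f h).
Proof. apply: funext => w; rewrite /smul /sadd -big_split; apply: eq_bigr => i _; exact: mulrDr. Qed.
Lemma smulZl k f h : smul (sscale k f) h = sscale k (smul f h).
Proof. apply: funext => w; rewrite /smul /sscale mulr_sumr; apply: eq_bigr => i _; by rewrite mulrA. Qed.
Lemma smul0l h : smul szero h = szero.
Proof. apply: funext => w; rewrite /smul /szero; apply: big1 => i _; exact: mul0r. Qed.

Lemma smulA f g h : smul (smul f g) h = smul f (smul g h).
Proof.
apply: funext => w; elim: w f g h => [|c w IH] f g h.
  by rewrite !smul_nil mulrA.
rewrite !smul_cons smul_nil.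
have -> : (fun u => smul f g (c :: u)) =
   sadd (sscale (f [::]) (fun u => g (c :: u))) (smul (fun u => f (c :: u)) g).
  by apply: funext => u; rewrite smul_cons.
rewrite smulDl smulZl /sadd /sscale IH mulrDr !addrA mulrA.
done.
Qed.

Lemma smul1l f : smul sone f = f.
Proof.
apply: funext => -[|c w]; first by rewrite smul_nil mul1r.
rewrite smul_cons /= mul1r.
have -> : (fun u => sone (c :: u)) = szero by [].
by rewrite smul0l /szero addr0.
Qed.

Lemma smul1r f : smul f sone = f.
Proof.
apply: funext => w; elim: w f => [|c w IH] f; first by rewrite smul_nil mulr1.
by rewrite smul_cons IH /= mulr0 add0r.
Qed.

Definition S := series.
HB.instance Definition _ := gen_eqMixin S.
HB.instance Definition _ := gen_choiceMixin S.

Lemma saddA : associative (sadd : S -> S -> S).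
Proof. by move=> f g h; apply: funext => w; rewrite /sadd addrA. Qed.
Lemma saddC : commutative (sadd : S -> S -> S).
Proof. by move=> f g; apply: funext => w; rewrite /sadd addrC. Qed.
Lemma sadd0 : left_id (szero : S) sadd.
Proof. by move=> f; apply: funext => w; rewrite /sadd /szero add0r. Qed.
Lemma saddN : left_inverse (szero : S) sopp sadd.
Proof. by move=> f; apply: funext => w; rewrite /sadd /sopp /szero addNr. Qed.

Lemma smulA' : associative (smul : S -> S -> S). Proof. by move=> *; rewrite smulA. Qed.
Lemma smul1l' : left_id (sone : S) smul. Proof. by move=> *; apply: smul1l. Qed.
Lemma smul1r' : right_id (sone : S) smul. Proof. by move=> *; apply: smul1r. Qed.
Lemma smulDl' : left_distributive (smul : S -> S -> S) sadd. Proof. by move=> *; apply: smulDl. Qed.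
Lemma smulDr' : right_distributive (smul : S -> S -> S) sadd. Proof. by move=> *; apply: smulDr. Qed.
HB.instance Definition _ := GRing.isPzRing.Build S saddA saddC sadd0 saddN
  smulA' smul1l' smul1r' smulDl' smulDr'.

Lemma addE (f g : S) : sadd f g = f + g. Proof. by []. Qed.
Lemma subE (f g : S) : ssub f g = f - g. Proof. by []. Qed.
Lemma mulE (f g : S) : smul f g = f * g. Proof. by []. Qed.
Lemma oneE : (sone : S) = 1. Proof. by []. Qed.
Lemma zeroE : (szero : S) = 0. Proof. by []. Qed.

Lemma smul_letr f c w d :
  smul f (slet c) (rcons w d) = f w * (if letter_eqb d c then 1 else 0).
Proof.
elim: w f => [|e w IH] f.
  by rewrite /= smul_cons smul_nil /= mulr0 addr0.
rewrite rcons_cons smul_cons IH.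
have -> : slet c (e :: rcons w d) = 0 by case: w {IH}.
by rewrite mulr0 add0r.
Qed.

Lemma smul_letl f c d w :
  smul (slet c) f (d :: w) = (if letter_eqb d c then 1 else 0) * f w.
Proof.
rewrite smul_cons /= mul0r add0r.
have -> : (fun u => slet c (d :: u)) = sscale (if letter_eqb d c then 1 else 0) sone.
  by apply: funext => -[|? ?]; rewrite /sscale /= ?mulr1 ?mulr0.
by rewrite smulZl smul1l.
Qed.

Lemma cancel_ab (F G : series) :
  smul (smul sa F) sb = smul (smul sa G) sb -> F = G.
Proof.
move=> h; apply: funext => w.
have := congr1 (fun s => s (La :: rcons w Lb)) h => /=.
rewrite -rcons_cons !smul_letr !smul_letl /=.
by rewrite !mul1r !mulr1.
Qed.

Definition agree n (f g : series) := forall w, (size w < n)%N -> f w = g w.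

Lemma agree_refl n f : agree n f f. Proof. by []. Qed.
Lemma agree_le m n f g : (m <= n)%N -> agree n f g -> agree m f g.
Proof. move=> hmn h w hw; apply: h; exact: leq_trans hw hmn. Qed.
Lemma agree_add n f f' g g' : agree n f f' -> agree n g g' -> agree n (sadd f g) (sadd f' g').
Proof. by move=> h1 h2 w hw; rewrite /sadd h1 // h2. Qed.
Lemma agree_opp n f f' : agree n f f' -> agree n (sopp f) (sopp f').
Proof. by move=> h1 w hw; rewrite /sopp h1. Qed.
Lemma agree_mul n f f' g g' : agree n f f' -> agree n g g' -> agree n (smul f g) (smul f' g').
Proof.
move=> h1 h2 w hw; rewrite /smul; apply: eq_bigr => i _.
rewrite h1 ?h2 //.
  by rewrite size_drop; lia.
by rewrite size_take; case: ifP => // ?; lia.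
Qed.

Lemma agree_mull n f g g' : f [::] = 0 -> agree n g g' -> agree n.+1 (smul f g) (smul f g').
Proof.
move=> h0 h w hw; rewrite /smul !big_ord_recl /= take0 h0 !mul0r !add0r.
apply: eq_bigr => i _; rewrite h // size_drop /bump /=; have := ltn_ord i; lia.
Qed.

Lemma agree_mulr n f f' g : g [::] = 0 -> agree n f f' -> agree n.+1 (smul f g) (smul f' g).
Proof.
move=> h0 h w hw; rewrite /smul !big_ord_recr /= drop_size h0 !mulr0 !addr0.
apply: eq_bigr => i _; rewrite h // size_take /=; have := ltn_ord i; case: ifP; lia.
Qed.

Lemma contr_l (E Q : series) : Q [::] = 0 -> E = smul Q E -> E = szero.
Proof.
move=> hQ hE; suff H : forall n, agree n E szero.
  by apply: funext => w; apply: (H (size w).+1).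
elim=> [|n IH]; first by [].
rewrite hE -[szero in agree _ _ szero](mulr0 (Q : S)).
exact: agree_mull.
Qed.

Lemma contr_r (E Q : series) : Q [::] = 0 -> E = smul E Q -> E = szero.
Proof.
move=> hQ hE; suff H : forall n, agree n E szero.
  by apply: funext => w; apply: (H (size w).+1).
elim=> [|n IH]; first by [].
rewrite hE -[szero in agree _ _ szero](mul0r (Q : S)).
exact: agree_mulr.
Qed.

Lemma z_nil : (sadd (ssub sx (smul sa sb)) (smul sb sa)) [::] = 0.
Proof. by rewrite /ssub /sadd /sopp /smul /= !big_ord1 /= !mul0r oppr0 !addr0. Qed.

Theorem theorem4 (D U : series)
  (hD : D = sadd sone
              (smul (sadd (ssub sx (smul sa sb)) (smul (smul sa D) sb)) D))
  (hU : smul (ssub sone (smul (smul sa D) sb)) (sadd sone (smul (smul sa U) sb)) = sone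
        /\ smul (sadd sone (smul (smul sa U) sb)) (ssub sone (smul (smul sa D) sb)) = sone) :
  U = smul (sadd sone (smul (smul sa U) sb))
           (sadd sone (smul (sadd (ssub sx (smul sa sb)) (smul sb sa)) U))
  /\ (forall V : series,
        V = smul (sadd sone (smul (smul sa V) sb))
                 (sadd sone (smul (sadd (ssub sx (smul sa sb)) (smul sb sa)) V))
        -> V = U).
Proof.
have Hz := z_nil.
have uniq : forall V V' : series,
    V = smul (sadd sone (smul (smul sa V) sb))
                 (sadd sone (smul (sadd (ssub sx (smul sa sb)) (smul sb sa)) V)) ->
    V' = smul (sadd sone (smul (smul sa V') sb))
                 (sadd sone (smul (sadd (ssub sx (smul sa sb)) (smul sb sa)) V')) -> V = V'.
  move=> V V' hV hV'.
  suff H : forall n, agree n V V'.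
    by apply: funext => w; apply: (H (size w).+1).
  elim=> [|n IH]; first by [].
  rewrite hV hV'; apply: agree_mul; apply: agree_add; try exact: agree_refl.
    apply: agree_mul; last exact: agree_refl.
    by apply: agree_mull.
  exact: agree_mull.
suff HU : U = smul (sadd sone (smul (smul sa U) sb))
           (sadd sone (smul (sadd (ssub sx (smul sa sb)) (smul sb sa)) U)).
  by split=> // V hV; apply: uniq.
move: hD hU; rewrite !addE !subE !mulE !oneE.
move: D U => D U.
set a : S := sa; set b : S := sb; set x : S := sx.
move=> hD [hU1 hU2].
have nilD (f g : S) : (f + g) [::] = f [::] + g [::] by [].
have nilN (f : S) : (- f) [::] = - f [::] by [].
have nilM (f g : S) : (f * g) [::] = f [::] * g [::] by rewrite -mulE smul_nil.
have nila : a [::] = 0 by [].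
have nilb : b [::] = 0 by [].
have nilx : x [::] = 0 by [].
pose P := x - a * b + a * (D : S) * b.
have P0 : P [::] = 0 by rewrite /P !(nilD, nilN, nilM) nila nilb nilx !mul0r ?mulr0 oppr0 !addr0.
have hD' : (D : S) = 1 + P * D by [].
have hW : a * (U : S) * b = (1 + a * (U : S) * b) * (a * (D : S) * b).
  have h := hU2; rewrite mulrBr mulr1 in h.
  apply: (addrI 1); by rewrite -[X in _ = X + _]h subrK.
have hU' : (U : S) = (D : S) + (U : S) * b * a * D.
  apply: cancel_ab; rewrite !mulE -/a -/b.
  rewrite {1}hW mulrDl mul1r mulrDr mulrDl !mulrA //.
have hDr : (D : S) * (1 - P) = 1.
  have h1 : (1 - P) * (D : S) = 1 by rewrite mulrBl mul1r {1}hD' addrK.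
  pose E := (D : S) * (1 - P) - 1.
  have h2 : (1 - P) * E = 0 by rewrite /E mulrBr mulr1 mulrA h1 mul1r subrr.
  have h3 : E = smul P E.
    by move: h2; rewrite mulrBl mul1r mulE => H; apply: subr0_eq; exact H.
  have := contr_l P0 h3; rewrite zeroE /E => H; apply: subr0_eq; exact H.
pose Q := b * a + P.
have Q0 : Q [::] = 0 by rewrite /Q nilD nilM nila nilb mul0r P0 addr0.
have e1 : (U : S) * (1 - P) = 1 + (U : S) * b * a.
  by rewrite {1}hU' mulrDl hDr -mulrA hDr mulr1.
have hUQ : (U : S) * (1 - Q) = 1.
  have -> : 1 - Q = (1 - P) - b * a by rewrite /Q opprD addrCA addrC.
  by rewrite mulrBr e1 mulrA addrK.
have hQU : (1 - Q) * U = 1.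
  pose E := (1 - Q) * U - 1.
  have h2 : E * (1 - Q) = 0 by rewrite /E mulrBl mul1r -mulrA hUQ mulr1 subrr.
  have h3 : E = smul E Q.
    by move: h2; rewrite mulrBr mulr1 mulE => H; apply: subr0_eq; exact H.
  have := contr_r Q0 h3; rewrite zeroE /E => H; apply: subr0_eq; exact H.
have hQU' : (U : S) = 1 + Q * U.
  have h := hQU; rewrite mulrBl mul1r in h.
  by rewrite -[X in _ = X + _]h subrK.
have hz : Q - a * (D : S) * b = x - a * b + b * a by rewrite /Q /P addrA addrK addrC.
rewrite -hz mulrBl addrA -hQU'.
have -> : (U : S) - a * (D : S) * b * U = (1 - a * (D : S) * b) * U by rewrite mulrBl mul1r.
by rewrite mulrA hU2 mul1r.
Qed.
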